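(* Let $(Q,P)$ be a weakly quasi-lattice ordered group and let $\Lambda$ be a $P$-graph with $\mathrm{FA}(\Lambda)\neq\emptyset$. With $\mathcal{X}(\Lambda)*P=\{(x,m)\in\mathcal{X}(\Lambda)\times P: x\cap\Lambda^m\neq\emptyset\}$ and $\mathrm{dom}(m)=\{x\in\mathcal{X}(\Lambda): x\cap\Lambda^m\neq\emptyset\}$, the semigroup action $(\mathcal{X}(\Lambda),P,T)$, $T(x,m)=\{\mu\in\Lambda: x(0,m)\mu\in x\}$, is directed: for all $m,n\in P$ with $\mathrm{dom}(m)\cap\mathrm{dom}(n)\neq\emptyset$ there is $l\in P$ with $m,n\le l$ and $\mathrm{dom}(m)\cap\mathrm{dom}(n)\subseteq\mathrm{dom}(l)$.
   Context: $(Q,P)$ weakly quasi-lattice ordered: $Q$ a discrete group, $P\subseteq Q$ a subsemigroup containing the identity $e$ with $P\cap P^{-1}=\{e\}$, and, with $p\le r$ meaning $pq=r$ for some $q\in P$, any two elements of $P$ with a common upper bound have a least common upper bound. A $P$-graph is a countable small category $\Lambda$ (range/source $r,s$) with a functor $d:\Lambda\to P$ with unique factorisation (if $d(\lambda)=pq$ there are unique $\mu,\nu$ with $\lambda=\mu\nu$, $d(\mu)=p$, $d(\nu)=q$). Write $\Lambda^m=d^{-1}(m)$, $\lambda\Lambda=\{\lambda\mu: s(\lambda)=r(\mu)\}$, $\mu\preceq\lambda$ iff $\lambda\in\mu\Lambda$. $\mathrm{FA}(\Lambda)$ is the set of $\lambda$ such that for all $\mu\in\lambda\Lambda,\nu\in\Lambda$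 there is a finite $J\subseteq\Lambda$ with $\mu\Lambda\cap\nu\Lambda=\bigcup_{\kappa\in J}\kappa\Lambda$. A filter is a nonempty hereditary and directed subset of $\Lambda$ (w.r.t. $\preceq$); for a filter $x$, $d|_x$ is injective, and $x(0,m)$ denotes the unique element of $x\cap\Lambda^m$ when nonempty. Path space $\mathcal{X}(\Lambda)=\{x\text{ filter}: x\cap\mathrm{FA}(\Lambda)\neq\emptyset\}$. $(\mathcal{X}(\Lambda),P,T)$ is a semigroup action in the sense that $(x,e)\in\mathcal{X}(\Lambda)*P$ with $T(x,e)=x$, and $(x,mn)\in\mathcal{X}(\Lambda)*P$ iff $(x,m),(T(x,m),n)\in\mathcal{X}(\Lambda)*P$, with $T(T(x,m),n)=T(x,mn)$. *)

(* Defs.v *)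
From Stdlib Require Import List.
Set Implicit Arguments.
Unset Strict Implicit.

Record Group := {
  gcar :> Type;
  gmul : gcar -> gcar -> gcar;
  gone : gcar;
  ginv : gcar -> gcar;
  gmulA : forall a b c, gmul a (gmul b c) = gmul (gmul a b) c;
  gmul1 : forall a, gmul gone a = a;
  gmulV : forall a, gmul (ginv a) a = gone
}.

Section WQLO.
Variable Q : Group.

Definition positive_cone (P : Q -> Prop) : Prop :=
  P (@gone Q) /\
  (forall p q, P p -> P q -> P (gmul p q)) /\
  (forall p, P p -> P (ginv p) -> p = @gone Q).

Definition ple (P : Q -> Prop) (p r : Q) : Prop :=
  exists q, P q /\ gmul p q = r.

Definition wqlo (P : Q -> Prop) : Prop :=
  positive_cone P /\
  forall p q, P p -> P q ->
    (exists r, P r /\ ple P p r /\ ple P q r) ->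
    exists l, P l /\ ple P p l /\ ple P q l /\
      forall r, P r -> ple P p r -> ple P q r -> ple P l r.
End WQLO.

(* A P-graph: countable small category with degree functor d : Λ -> P
   satisfying unique factorisation.  Composition [comp λ μ] (written λμ)
   is meaningful when s λ = r μ. *)
Record PGraph (Q : Group) (P : Q -> Prop) := {
  Obj : Type;
  Mor : Type;
  rng : Mor -> Obj;
  src : Mor -> Obj;
  comp : Mor -> Mor -> Mor;
  idm : Obj -> Mor;
  rng_id : forall v, rng (idm v) = v;
  src_id : forall v, src (idm v) = v;
  rng_comp : forall l m, src l = rng m -> rng (comp l m) = rng l;
  src_comp : forall l m, src l = rng m -> src (comp l m) = src m;
  comp_id_l : forall l, comp (idm (rng l)) l = l;
  comp_id_r : forall l, comp l (idm (src l)) = l;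
  compA : forall a b c, src a = rng b -> src b = rng c ->
            comp a (comp b c) = comp (comp a b) c;
  Obj_countable : exists f : Obj -> nat, forall u v, f u = f v -> u = v;
  Mor_countable : exists f : Mor -> nat, forall u v, f u = f v -> u = v;
  deg : Mor -> Q;
  deg_P : forall l, P (deg l);
  deg_id : forall v, deg (idm v) = @gone Q;
  deg_comp : forall l m, src l = rng m -> deg (comp l m) = gmul (deg l) (deg m);
  fact_ex : forall l p q, P p -> P q -> deg l = gmul p q ->
    exists mu nu, src mu = rng nu /\ l = comp mu nu /\ deg mu = p /\ deg nu = q;
  fact_uniq : forall l mu nu mu' nu',
    src mu = rng nu -> l = comp mu nu ->
    src mu' = rng nu' -> l = comp mu' nu' ->
    deg mu = deg mu' -> deg nu = deg nu' -> mu = mu' /\ nu = nu'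
}.

Section PathSpace.
Variables (Q : Group) (P : Q -> Prop) (L : PGraph P).

Notation M := (Mor L).

(* λΛ = { λμ : s(λ) = r(μ) } *)
Definition ext (l : M) (k : M) : Prop :=
  exists m, src (p0:=L) l = rng (p0:=L) m /\ k = comp (p0:=L) l m.

Definition preceq (mu l : M) : Prop := ext mu l.

Definition FA (l : M) : Prop :=
  forall mu nu, ext l mu ->
    exists J : list M, forall k, (ext mu k /\ ext nu k) <->
                                 (exists kap, In kap J /\ ext kap k).

Definition filter (x : M -> Prop) : Prop :=
  (exists l, x l) /\
  (forall l mu, x l -> preceq mu l -> x mu) /\
  (forall l mu, x l -> x mu -> exists nu, x nu /\ preceq l nu /\ preceq mu nu).

Definition pathspace (x : M -> Prop) : Prop :=
  filter x /\ exists l, x l /\ FA l.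

Definition dom (m : Q) (x : M -> Prop) : Prop :=
  pathspace x /\ exists l, x l /\ deg (p0:=L) l = m.

Definition Tshift (x : M -> Prop) (m : Q) : M -> Prop :=
  fun mu => exists l, x l /\ deg (p0:=L) l = m /\ src (p0:=L) l = rng (p0:=L) mu /\ x (comp (p0:=L) l mu).

Definition directed_action : Prop :=
  forall m n, P m -> P n ->
    (exists x, dom m x /\ dom n x) ->
    exists l, P l /\ ple P m l /\ ple P n l /\
      forall x, dom m x -> dom n x -> dom l x.
End PathSpace.

(* Main.v *)
Require Import Defs.
From Stdlib Require Import List.

Lemma common_ub (Q : Group) (P : Q -> Prop) (L : PGraph P) (m n : Q) (y : Mor L -> Prop) :
  dom (L:=L) m y -> dom (L:=L) n y ->
  exists nu, y nu /\ ple P m (deg nu) /\ ple P n (deg nu).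
Proof.
  intros [[[_ [_ Hdir]] _] [a [Ha Hda]]] [_ [b [Hb Hdb]]].
  destruct (Hdir a b Ha Hb) as [nu [Hnu [[r1 [E1 F1]] [r2 [E2 F2]]]]].
  exists nu; split; [exact Hnu|split].
  - exists (deg r1); split; [apply deg_P|]. rewrite F1, deg_comp, Hda; auto.
  - exists (deg r2); split; [apply deg_P|]. rewrite F2, deg_comp, Hdb; auto.
Qed.

Theorem proposition5p10 (Q : Group) (P : Q -> Prop) (L : PGraph P) :
  wqlo P ->
  (exists l : Mor L, @FA Q P L l) ->
  @directed_action Q P L.
Proof.
  intros [_ Hlub] _ m n Pm Pn [x [Hxm Hxn]].
  destruct (@common_ub _ _ _ _ _ _ Hxm Hxn) as [nu [Hnu [H1 H2]]].
  destruct (Hlub m n Pm Pn (ex_intro _ (deg nu) (conj (deg_P nu) (conj H1 H2))))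
    as [l [Pl [Hml [Hnl Hleast]]]].
  exists l; split; [exact Pl|split; [exact Hml|split; [exact Hnl|]]].
  intros y Hym Hyn.
  destruct (@common_ub _ _ _ _ _ _ Hym Hyn) as [nu' [Hnu' [H1' H2']]].
  destruct (Hleast (deg nu') (deg_P nu') H1' H2') as [q [Pq Eq]].
  destruct (fact_ex (p0:=L) Pl Pq (eq_sym Eq)) as [al [be [Hs [Hc [Hdal _]]]]].
  destruct Hym as [Hpy _].
  split; [exact Hpy|].
  exists al; split; [|exact Hdal].
  destruct Hpy as [[_ [Hher _]] _].
  apply (Hher nu' al Hnu'). exists be; split; auto.
Qed.
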